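(* Let $f:\mathbb{R}^n \to \mathbb{R}$ be $\alpha$-strongly convex. Let $C_1,\dots,C_m\subset\mathbb{R}^n$ be closed convex sets with nonempty intersection $C=\bigcap_{i=1}^m C_i$, let $I=\{1,\dots,m\}=I_C\cup I_Q$ (disjoint) where for each $i\in I_Q$, $C_i=\{x\in\mathbb{R}^n : A_i x\in Q_i\}$ with $A_i\in\mathbb{R}^{m_i\times n}$ and $Q_i\subset\mathbb{R}^{m_i}$ nonempty closed convex. Assume that the collection $\{C_1,\dots,C_m\}$ is boundedly linearly regular and that for each $i\in I_Q$ the collection $\{Q_i,\mathcal{R}(A_i)\}$ is boundedly linearly regular. Run the algorithm RBPSFP described in the context with arbitrary starting points $x_0\in\mathbb{R}^n$, $x_0^*\in\partial f(x_0)$ and probabilities $p_i>0$. Then (for every realization of the random indices) the iterates $x_k$ and $x_k^*$ remain bounded and \[ \operatorname{dist}_f^{x_{k+1}^*}(x_{k+1},C) \le \operatorname{dist}_f^{x_k^*}(x_k,C)\quad\text{for all }k; \] moreover $\mathbb{E}\big[\operatorname{dist}_f^{x_k^*}(x_k,C)^2\big]\to 0$, where the expectation is with respect to the random choice of indices, and there is a constant $c>0$ such that \[ \mathbb{E}\left[\operatorname{dist}(x_k,C)\right] \le \frac{c}{\sqrt{k}}\quad\text{for all } k\ge 1. \]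
   Context: $f$ is $\alpha$-strongly convex ($\alpha>0$) if $f(y)\ge f(x)+\langle x^*,y-x\rangle+\frac{\alpha}{2}\|y-x\|_2^2$ for all $x,y$, $x^*\in\partial f(x)$. Its conjugate $f^*(x^* )=\sup_x\langle x^*,x\rangle-f(x)$ is then differentiable. Bregman distance: $D_f^{x^*}(x,y)=f(y)-f(x)-\langle x^*,y-x\rangle$ for $x^*\in\partial f(x)$. For a nonempty closed convex $D$, the Bregman projection $\Pi_D^{x^*}(x)$ is the unique minimizer of $y\mapsto D_f^{x^*}(x,y)$ over $D$, and $\operatorname{dist}_f^{x^*}(x,D)^2$ is the minimal value; a subgradient $\hat x^*\in\partial f(\hat x)$ at $\hat x=\Pi_D^{x^*}(x)$ is admissible if $\langle\hat x^*-x^*,y-\hat x\rangle\ge0$ for all $y\in D$ (one always exists). $\operatorname{dist}$ is Euclidean distance, $P_Q$ orthogonal projection onto $Q$, $\mathcal{R}(A)$ the range. A collection of closed convex sets with nonempty intersection $D=\bigcap_{j=1}^r D_j$ is boundedly linearly regular if for every $R>0$ there is $\gamma>0$ with $\operatorname{dist}(x,D)^2\le\gamma\sum_j\operatorname{dist}(x,D_j)^2$ whenever $\|x\|_2\le R$. Algorithm RBPSFP: given $x_0$, $x_0^*\in\partial f(x_0)$ and probabilities $p_i>0$ ($\sum_{i\in I}p_i=1$), for $k=0,1,2,\dots$ choose $i_k\in I$ independently at random with $P(i_k=i)=p_i$. If $i_k\in I_C$: set $x_{k+1}=\Pi_{C_{i_k}}^{x_k^*}(x_k)$ and let $x_{k+1}^*$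 be an admissible subgradient. If $i_k\in I_Q$: set $w_k=A_{i_k}x_k-P_{Q_{i_k}}(A_{i_k}x_k)$, $\beta_k=\langle A_{i_k}^Tw_k,x_k\rangle-\|w_k\|_2^2$, and $x_{k+1}=\Pi_{H_k}^{x_k^*}(x_k)$ with $H_k=\{x:\langle A_{i_k}^Tw_k,x\rangle\le\beta_k\}$, together with $x_{k+1}^*=x_k^*-t_kA_{i_k}^Tw_k$, where $t_k$ minimizes $t\mapsto f^*(x_k^*-tA_{i_k}^Tw_k)+t\beta_k$ over $t\in\mathbb{R}$ (so that $x_{k+1}=\nabla f^*(x_{k+1}^* )$); if $w_k=0$ then $x_{k+1}=x_k$, $x_{k+1}^*=x_k^*$. *)

(* Defs.v *)
From HB Require Import structures.
From mathcomp Require Import all_boot all_order all_algebra.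
From mathcomp Require Import all_classical all_reals all_analysis.
Set Implicit Arguments. Unset Strict Implicit. Unset Printing Implicit Defensive.
Import Order.TTheory GRing.Theory Num.Theory.
Import numFieldNormedType.Exports.
Local Open Scope classical_set_scope.
Local Open Scope ring_scope.

Section Defs.
Variable R : realType.

Definition dotv (k : nat) (u v : 'cV[R]_k) : R := \sum_(j < k) u j 0 * v j 0.
Definition enorm (k : nat) (u : 'cV[R]_k) : R := Num.sqrt (dotv u u).

Definition euc_dist (k : nat) (x : 'cV[R]_k) (D : set 'cV[R]_k) : R :=
  inf [set r | exists2 y, D y & r = enorm (x - y)].

Definition cvx_set (k : nat) (D : set 'cV[R]_k) : Prop :=
  forall x y t, D x -> D y -> 0 <= t <= 1 -> D (t *: x + (1 - t) *: y).

Definition is_orth_proj (k : nat) (D : set 'cV[R]_k) (x p : 'cV[R]_k) : Prop :=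
  D p /\ forall y, D y -> enorm (x - p) <= enorm (x - y).

Definition mxrange (k n : nat) (A : 'M[R]_(k, n)) : set 'cV[R]_k :=
  [set y | exists x, y = A *m x].

Definition bdd_lin_regular (k : nat) (J : finType) (D : J -> set 'cV[R]_k) : Prop :=
  forall rho : R, 0 < rho -> exists2 gamma : R, 0 < gamma &
    forall x, enorm x <= rho ->
      euc_dist x [set y | forall j, D j y] ^+ 2 <= gamma * \sum_(j : J) euc_dist x (D j) ^+ 2.

Variable n : nat.
Implicit Types (f : 'cV[R]_n -> R) (x y xs : 'cV[R]_n) (D : set 'cV[R]_n).

Definition subgrad f x xs : Prop := forall y, f x + dotv xs (y - x) <= f y.

Definition convex_fun f : Prop :=
  forall x y (t : R), 0 <= t <= 1 -> f (t *: x + (1 - t) *: y) <= t * f x + (1 - t) * f y.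

Definition strongly_convex (alpha : R) f : Prop :=
  convex_fun f /\
  forall x y xs, subgrad f x xs ->
    f x + dotv xs (y - x) + alpha / 2 * enorm (y - x) ^+ 2 <= f y.

Definition fconj f (xs : 'cV[R]_n) : R :=
  sup [set r | exists x, r = dotv xs x - f x].

Definition bregman f xs x y : R := f y - f x - dotv xs (y - x).

Definition is_bproj f xs x D y : Prop :=
  D y /\ forall z, D z -> bregman f xs x y <= bregman f xs x z.

Definition bdist f xs x D : R :=
  Num.sqrt (inf [set r | exists2 y, D y & r = bregman f xs x y]).

Definition admissible f xs D y ys : Prop :=
  subgrad f y ys /\ forall z, D z -> 0 <= dotv (ys - xs) (z - y).

End Defs.

Definition rbpsfp_step (R : realType) (n m : nat) (f : 'cV[R]_n -> R)
  (isQ : 'I_m -> bool) (C : 'I_m -> set 'cV[R]_n) (mi : 'I_m -> nat)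
  (A : forall i, 'M[R]_(mi i, n)) (Q : forall i, set 'cV[R]_(mi i))
  (i : 'I_m) (x xs x' xs' : 'cV[R]_n) : Prop :=
  if ~~ isQ i then
    is_bproj f xs x (C i) x' /\ admissible f xs (C i) x' xs'
  else
    exists2 p : 'cV[R]_(mi i), is_orth_proj (Q i) (A i *m x) p &
      let w := A i *m x - p in
      (w = 0 -> x' = x /\ xs' = xs) /\
      (w <> 0 ->
        let a := (A i)^T *m w in
        let beta := dotv a x - enorm w ^+ 2 in
        let H := [set z | dotv a z <= beta] in
        is_bproj f xs x H x' /\
        exists2 t : R, xs' = xs - t *: a &
          forall s : R, fconj f (xs - t *: a) + t * beta <= fconj f (xs - s *: a) + s * beta).

(* Expectation over the first k random indices (i.i.d. with law p) of a
   function of the history of indices. *)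
Definition expect_hist (R : realType) (m : nat) (p : 'I_m -> R) (k : nat)
  (g : seq 'I_m -> R) : R :=
  \sum_(h : k.-tuple 'I_m) (\prod_(j < k) p (tnth h j)) * g (tval h).

(* Main.v *)
Require Import Defs.
From HB Require Import structures.
From mathcomp Require Import all_boot all_order all_algebra.
From mathcomp Require Import all_classical all_reals all_analysis.
From mathcomp Require Import ring lra.
Set Implicit Arguments. Unset Strict Implicit. Unset Printing Implicit Defensive.
Import Order.TTheory GRing.Theory Num.Theory.
Import numFieldNormedType.Exports.
Local Open Scope classical_set_scope.
Local Open Scope ring_scope.


Section L1.
Variable R : realType.
Section K.
Variable k : nat.
Implicit Types u v w : 'cV[R]_k.

Lemma dotvC u v : dotv u v = dotv v u.
Proof. by rewrite /dotv; apply: eq_bigr => j _; rewrite mulrC. Qed.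

Lemma dotvDl u v w : dotv (u + v) w = dotv u w + dotv v w.
Proof. by rewrite /dotv -big_split; apply: eq_bigr => j _; rewrite !mxE mulrDl. Qed.

Lemma dotvDr u v w : dotv w (u + v) = dotv w u + dotv w v.
Proof. by rewrite dotvC dotvDl !(dotvC w). Qed.

Lemma dotvZl a u v : dotv (a *: u) v = a * dotv u v.
Proof. by rewrite /dotv mulr_sumr; apply: eq_bigr => j _; rewrite !mxE mulrA. Qed.

Lemma dotvZr a u v : dotv u (a *: v) = a * dotv u v.
Proof. by rewrite dotvC dotvZl dotvC. Qed.

Lemma dotvNl u v : dotv (- u) v = - dotv u v.
Proof. by rewrite -scaleN1r dotvZl mulN1r. Qed.

Lemma dotvNr u v : dotv u (- v) = - dotv u v.
Proof. by rewrite dotvC dotvNl dotvC. Qed.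

Lemma dotvBl u v w : dotv (u - v) w = dotv u w - dotv v w.
Proof. by rewrite dotvDl dotvNl. Qed.

Lemma dotvBr u v w : dotv w (u - v) = dotv w u - dotv w v.
Proof. by rewrite dotvDr dotvNr. Qed.

Lemma dotv0l v : dotv 0 v = 0.
Proof. by rewrite -(scale0r 0) dotvZl mul0r. Qed.

Lemma dotv0r v : dotv v 0 = 0.
Proof. by rewrite dotvC dotv0l. Qed.

Lemma dotvv_ge0 u : 0 <= dotv u u.
Proof. by rewrite /dotv; apply: sumr_ge0 => j _; rewrite -expr2 sqr_ge0. Qed.

Lemma dotvv_eq0 u : dotv u u = 0 -> u = 0.
Proof.
move=> /eqP; rewrite /dotv psumr_eq0 => [/allP H|j _]; last by rewrite -expr2 sqr_ge0.
apply/matrixP => i j; rewrite ord1 mxE.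
have := H i (mem_index_enum _); rewrite -expr2 sqrf_eq0 => /implyP.
by move=> /(_ isT) /eqP.
Qed.

Lemma enorm_ge0 u : 0 <= enorm u.
Proof. exact: sqrtr_ge0. Qed.

Lemma enorm_sq u : enorm u ^+ 2 = dotv u u.
Proof. by rewrite /enorm sqr_sqrtr // dotvv_ge0. Qed.

Lemma enorm_eq0 u : enorm u = 0 -> u = 0.
Proof. by move=> h; apply: dotvv_eq0; rewrite -enorm_sq h expr0n. Qed.

Lemma enorm0 : enorm (0 : 'cV[R]_k) = 0.
Proof. by rewrite /enorm dotv0l sqrtr0. Qed.

Lemma dotv_sq_le u v : dotv u v ^+ 2 <= dotv u u * dotv v v.
Proof.
have [v0|vn0] := eqVneq (dotv v v) 0.
  by rewrite (dotvv_eq0 v0) dotv0r dotv0l expr0n /= mulr0.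
have vp : 0 < dotv v v by rewrite lt_neqAle eq_sym vn0 dotvv_ge0.
set t := dotv u v / dotv v v.
have e : dotv (u - t *: v) (u - t *: v) = dotv u u - dotv u v ^+ 2 / dotv v v.
  rewrite !(dotvBl, dotvBr, dotvZl, dotvZr) (dotvC v u) /t; field; exact: vn0.
have := dotvv_ge0 (u - t *: v).
by rewrite e subr_ge0 ler_pdivrMr.
Qed.

Lemma dotv_le u v : dotv u v <= enorm u * enorm v.
Proof.
have [h|h] := leP (dotv u v) 0.
  by apply: le_trans h _; rewrite mulr_ge0 // enorm_ge0.
rewrite -(ger0_norm (ltW h)) -[`|_|]sqrtr_sqr /enorm -sqrtrM ?dotvv_ge0 //.
by rewrite ler_sqrt ?mulr_ge0 ?dotvv_ge0 // dotv_sq_le.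
Qed.

Lemma dotv_absle u v : `|dotv u v| <= enorm u * enorm v.
Proof.
rewrite ler_norml dotv_le andbT lerNl -dotvNl.
apply: le_trans (dotv_le _ _) _.
by rewrite /enorm dotvNl dotvNr opprK.
Qed.

Lemma enormN u : enorm (- u) = enorm u.
Proof. by rewrite /enorm dotvNl dotvNr opprK. Qed.

Lemma enormB u v : enorm (u - v) = enorm (v - u).
Proof. by rewrite -enormN opprB. Qed.

Lemma enormZ a u : enorm (a *: u) = `|a| * enorm u.
Proof.
by rewrite /enorm dotvZl dotvZr mulrA -expr2 sqrtrM ?sqr_ge0 // sqrtr_sqr.
Qed.

Lemma enormD u v : enorm (u + v) <= enorm u + enorm v.
Proof.
rewrite -(@ler_pXn2r _ 2) ?nnegrE ?addr_ge0 ?enorm_ge0 //.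
rewrite enorm_sq sqrrD !enorm_sq dotvDl !dotvDr (dotvC v u).
have := dotv_le u v; lra.
Qed.

Lemma enorm_sqD u v : enorm (u + v) ^+ 2 = enorm u ^+ 2 + 2 * dotv u v + enorm v ^+ 2.
Proof. by rewrite !enorm_sq dotvDl !dotvDr (dotvC v u); ring. Qed.

Lemma coord_le u j : `|u j 0| <= enorm u.
Proof.
rewrite -[`|_|]sqrtr_sqr /enorm ler_sqrt ?dotvv_ge0 //.
rewrite /dotv (bigD1 j) //= -expr2.
rewrite lerDl; apply: sumr_ge0 => i _; rewrite -expr2 sqr_ge0 //.
Qed.

End K.

Lemma dotv_mul (k l : nat) (M : 'M[R]_(k, l)) x y :
  dotv (M *m x) y = dotv x (M^T *m y).
Proof.
rewrite /dotv.
under eq_bigr do rewrite !mxE big_distrl /=.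
rewrite exchange_big /=; apply: eq_bigr => j _.
rewrite !mxE big_distrr /=; apply: eq_bigr => i _.
by rewrite !mxE; ring.
Qed.

Lemma mx_norm_bound (k l : nat) (M : 'M[R]_(k, l)) :
  exists2 N : R, 0 <= N & forall v, enorm (M *m v) <= N * enorm v.
Proof.
exists (Num.sqrt (\sum_(i < k) dotv (row i M)^T (row i M)^T)); first exact: sqrtr_ge0.
move=> v; rewrite /enorm -sqrtrM; last by apply: sumr_ge0 => i _; apply: dotvv_ge0.
rewrite ler_sqrt; last by apply: mulr_ge0; [apply: sumr_ge0 => i _|]; apply: dotvv_ge0.
rewrite {1}/dotv big_distrl /=; apply: ler_sum => i _.
have -> : (M *m v) i 0 = dotv (row i M)^T v.
  by rewrite !mxE /dotv; apply: eq_bigr => j _; rewrite !mxE.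
by rewrite -expr2 dotv_sq_le.
Qed.

End L1.


Section InfSup.
Variable R : realType.
Implicit Types S : set R.

Lemma inf_le_of S b r0 : (forall r, S r -> b <= r) -> S r0 -> inf S <= r0.
Proof. move=> hb Sr0; apply: (ge_inf _ Sr0); exists b => r /hb. done. Qed.

Lemma le_inf_of S c r0 : S r0 -> (forall r, S r -> c <= r) -> c <= inf S.
Proof. move=> Sr0 hc; apply: lb_le_inf; first by exists r0. by move=> r /hc. Qed.

Lemma sup_ge_of S b r0 : (forall r, S r -> r <= b) -> S r0 -> r0 <= sup S.
Proof.
move=> hb Sr0; apply: (sup_upper_bound _ Sr0); split; first by exists r0.
by exists b => r /hb.
Qed.

Lemma sup_le_of S c r0 : S r0 -> (forall r, S r -> r <= c) -> sup S <= c.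
Proof. move=> Sr0 hc; apply: ge_sup; first by exists r0. by move=> r /hc. Qed.

Lemma le_of_forall_eps (x y : R) : (forall e, 0 < e -> x <= y + e) -> x <= y.
Proof.
move=> h; rewrite leNgt; apply/negP => yx.
have := h ((x - y) / 2); rewrite divr_gt0 // ?subr_gt0 // => /(_ isT).
lra.
Qed.

End InfSup.

Section L2.
Variable R : realType.
Variable n : nat.
Variable f : 'cV[R]_n -> R.
Variable alpha : R.
Hypothesis halpha : 0 < alpha.
Hypothesis hf : strongly_convex alpha f.
Implicit Types x y z xs ys : 'cV[R]_n.

Lemma fconvex x y t : 0 <= t <= 1 -> f (t *: x + (1 - t) *: y) <= t * f x + (1 - t) * f y.
Proof. by case: hf => h _; apply: h. Qed.

Lemma breg_sc x xs z : subgrad f x xs ->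
  alpha / 2 * enorm (z - x) ^+ 2 <= bregman f xs x z.
Proof.
case: hf => _ h sg; have hz := h x z xs sg; rewrite /bregman; lra.
Qed.

Lemma breg_ge0 x xs z : subgrad f x xs -> 0 <= bregman f xs x z.
Proof.
move=> sg; apply: le_trans (breg_sc z sg).
by rewrite mulr_ge0 ?sqr_ge0 // divr_ge0 // ltW.
Qed.

Lemma breg_self x xs : bregman f xs x x = 0.
Proof. by rewrite /bregman !subrr dotv0r subr0. Qed.

Definition bset xs x (D : set 'cV[R]_n) :=
  [set r | exists2 y, D y & r = bregman f xs x y].

Lemma bd2_le xs x D y : subgrad f x xs -> D y ->
  inf (bset xs x D) <= bregman f xs x y.
Proof.
move=> sg Dy; apply: (inf_le_of (b := 0)); last by exists y.
by move=> r [z _ ->]; apply: breg_ge0.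
Qed.

Lemma bd2_ge xs x D c y0 : D y0 -> (forall y, D y -> c <= bregman f xs x y) ->
  c <= inf (bset xs x D).
Proof.
move=> Dy0 h; apply: (le_inf_of (r0 := bregman f xs x y0)); first by exists y0.
by move=> r [z Dz ->]; apply: h.
Qed.

Lemma bd2_ge0 xs x D : subgrad f x xs -> 0 <= inf (bset xs x D).
Proof.
move=> sg; have [[y Dy]|D0] := pselect (exists y, D y).
  by apply: (bd2_ge Dy) => z _; apply: breg_ge0.
suff -> : bset xs x D = set0 by rewrite inf0.
by apply/seteqP; split => // r [y Dy _]; apply: D0; exists y.
Qed.

Lemma bdist_sq xs x D : subgrad f x xs ->
  bdist f xs x D ^+ 2 = inf (bset xs x D).
Proof. by move=> sg; rewrite /bdist sqr_sqrtr //; apply: bd2_ge0. Qed.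

Definition cset ys := [set r | exists x, r = dotv ys x - f x].

Lemma cset_ub x0 xs0 ys : subgrad f x0 xs0 -> forall r, cset ys r ->
  r <= dotv ys x0 - f x0 + enorm (ys - xs0) ^+ 2 / (2 * alpha).
Proof.
move=> sg r [y ->].
case: hf => _ /(_ x0 y xs0 sg) h.
have e : dotv ys y - f y = dotv ys x0 - f x0 + (dotv (ys - xs0) (y - x0) + (f x0 + dotv xs0 (y - x0) - f y)).
  by rewrite dotvBl !dotvBr; ring.
rewrite e lerD2l.
have := dotv_le (ys - xs0) (y - x0).
move: h; set a := enorm (ys - xs0); set b := enorm (y - x0).
move=> h h2.
have hab : a * b <= a ^+ 2 / (2 * alpha) + alpha / 2 * b ^+ 2.
  have : 0 <= (a - alpha * b) ^+ 2 / (2 * alpha) by rewrite divr_ge0 ?sqr_ge0 // mulr_ge0 // ltW.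
  move=> h3; apply: le_trans (_ : a * b + (a - alpha * b) ^+ 2 / (2 * alpha) <= _).
    by rewrite lerDl.
  rewrite le_eqVlt; apply/orP; left; apply/eqP; field.
  by rewrite gt_eqF.
lra.
Qed.

Lemma fconj_ge x0 xs0 ys z : subgrad f x0 xs0 -> dotv ys z - f z <= fconj f ys.
Proof.
move=> sg; apply: (sup_ge_of (cset_ub sg (ys := ys))); by exists z.
Qed.

Lemma fconj_sg x xs : subgrad f x xs -> fconj f xs = dotv xs x - f x.
Proof.
move=> sg; apply/eqP; rewrite eq_le; apply/andP; split; last exact: fconj_ge sg.
apply: (sup_le_of (r0 := dotv xs x - f x)); first by exists x.
move=> r [y ->]; have := sg y; rewrite dotvBr; lra.
Qed.

Lemma breg_ident xs x xs' x' z :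
  bregman f xs x z - bregman f xs' x' z = bregman f xs x x' + dotv (xs' - xs) (z - x').
Proof. rewrite /bregman !dotvBr !dotvBl; ring. Qed.

End L2.


Section L3.
Variable R : realType.

Lemma ratio_le (A B d1 d2 : R) : 0 < d1 -> 0 < d2 -> d2 * A <= d1 * B -> A / d1 <= B / d2.
Proof.
move=> h1 h2 h; rewrite ler_pdivrMr // mulrAC ler_pdivlMr //.
by rewrite mulrC [B * _]mulrC.
Qed.

Lemma dotv_expand (k : nat) (v w : 'cV[R]_k) s :
  dotv (v - s *: w) (v - s *: w) = dotv v v - 2 * s * dotv v w + s ^+ 2 * dotv w w.
Proof. rewrite !(dotvBl, dotvBr, dotvZl, dotvZr) (dotvC w v); ring. Qed.

Lemma enorm_le_sq (k : nat) (u v : 'cV[R]_k) : enorm u <= enorm v -> dotv u u <= dotv v v.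
Proof.
move=> h; rewrite -!enorm_sq; rewrite ler_pXn2r ?nnegrE ?enorm_ge0 //.
Qed.

Lemma proj_ineq (k : nat) (Q : set 'cV[R]_k) y p q :
  cvx_set Q -> is_orth_proj Q y p -> Q q -> dotv (y - p) (q - p) <= 0.
Proof.
move=> cQ [Qp hp] Qq; rewrite leNgt; apply/negP => cpos.
set c := dotv (y - p) (q - p) in cpos.
set d := dotv (q - p) (q - p).
have d0 : 0 <= d by apply: dotvv_ge0.
set s := c / (c + d).
have s0 : 0 < s by rewrite divr_gt0 // ltr_wpDr.
have s1 : s <= 1 by rewrite ler_pdivrMr ?ltr_wpDr // mul1r lerDl.
have Qu : Q (s *: q + (1 - s) *: p) by apply: cQ => //; rewrite (ltW s0) s1.
have := hp _ Qu => /enorm_le_sq.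
have -> : y - (s *: q + (1 - s) *: p) = (y - p) - s *: (q - p).
  by apply/matrixP => i j; rewrite !mxE; ring.
rewrite dotv_expand -/c -/d => h.
have h2 : s * (2 * c) <= s * (s * d) by nra.
rewrite ler_pM2l // in h2.
move: h2; rewrite /s mulrAC ler_pdivlMr ?ltr_wpDr //; nra.
Qed.

Lemma dist_of_proj (k : nat) (Q : set 'cV[R]_k) y p :
  is_orth_proj Q y p -> euc_dist y Q = enorm (y - p).
Proof.
move=> [Qp hp]; apply/eqP; rewrite eq_le; apply/andP; split.
  apply: (inf_le_of (b := 0)); last by exists p.
  by move=> r [z _ ->]; apply: enorm_ge0.
by apply: (le_inf_of (r0 := enorm (y - p))); [exists p|move=> r [z Qz ->]; apply: hp].
Qed.

Lemma euc_dist_ge0 (k : nat) (D : set 'cV[R]_k) y : 0 <= euc_dist y D.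
Proof.
rewrite /euc_dist.
have [[z Dz]|D0] := pselect (exists z, D z).
  apply: (le_inf_of (r0 := enorm (y - z))); first by exists z.
  by move=> r [w _ ->]; apply: enorm_ge0.
suff -> : [set r | exists2 y0, D y0 & r = enorm (y - y0)] = set0 by rewrite inf0.
by apply/seteqP; split => // r [w Dw _]; apply: D0; exists w.
Qed.

Lemma euc_dist_le (k : nat) (D : set 'cV[R]_k) y z : D z -> euc_dist y D <= enorm (y - z).
Proof.
move=> Dz; apply: (inf_le_of (b := 0)); last by exists z.
by move=> r [w _ ->]; apply: enorm_ge0.
Qed.

Lemma euc_dist_in (k : nat) (D : set 'cV[R]_k) y : D y -> euc_dist y D = 0.
Proof.
move=> Dy; apply/eqP; rewrite eq_le euc_dist_ge0 andbT.
by apply: le_trans (euc_dist_le _ Dy) _; rewrite subrr enorm0.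
Qed.

Lemma euc_dist_approx (k : nat) (D : set 'cV[R]_k) y e : D !=set0 -> 0 < e ->
  exists2 z, D z & enorm (y - z) < euc_dist y D + e.
Proof.
move=> [z0 Dz0] e0.
have := @inf_lt R [set r | exists2 y0, D y0 & r = enorm (y - y0)] (euc_dist y D + e).
case.
- by exists (enorm (y - z0)); exists z0.
- by rewrite /euc_dist ltrDl.
by move=> r [z Dz ->] h; exists z.
Qed.

End L3.

Section L3b.
Variable R : realType.
Variable n : nat.
Variable f : 'cV[R]_n -> R.
Variable alpha : R.
Hypothesis halpha : 0 < alpha.
Hypothesis hf : strongly_convex alpha f.
Implicit Types x y z xs ys a : 'cV[R]_n.

Lemma bproj_boundary x xs a beta x' : subgrad f x xs ->
  is_bproj f xs x [set z | dotv a z <= beta] x' -> beta < dotv a x -> dotv a x' = beta.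
Proof.
move=> sg [Hx' hmin] bx; apply/eqP; rewrite eq_le Hx' /=; rewrite leNgt; apply/negP => lt.
set s := (beta - dotv a x') / (dotv a x - dotv a x').
have dpos : 0 < dotv a x - dotv a x' by lra.
have s0 : 0 < s by rewrite divr_gt0 // subr_gt0.
have s1 : s < 1 by rewrite ltr_pdivrMr // mul1r; lra.
set u := s *: x + (1 - s) *: x'.
have au : dotv a u = beta.
  rewrite /u dotvDr !dotvZr /s; field; lra.
have Hu : dotv a u <= beta by rewrite au.
have h1 := hmin u Hu.
have cv := fconvex hf x x' (t:=s) (ltac:(rewrite (ltW s0) (ltW s1) //)).
have h2 : bregman f xs x u <= (1 - s) * bregman f xs x x'.
  move: cv; rewrite /bregman /u !dotvBr !dotvDr !dotvZr -/u; nra.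
have xx : x' != x.
  by apply/negP => /eqP e; move: lt; rewrite e; lra.
have bp : 0 < bregman f xs x x'.
  apply: lt_le_trans (breg_sc hf x' sg).
  rewrite mulr_gt0 ?divr_gt0 // exprn_gt0 // lt_neqAle enorm_ge0 andbT eq_sym.
  by apply/negP => /eqP /enorm_eq0 /eqP; rewrite subr_eq0 (negbTE xx).
nra.
Qed.

Lemma kkt_half xs x a beta x' :
  is_bproj f xs x [set z | dotv a z <= beta] x' -> dotv a x' = beta -> a != 0 ->
  exists lam, subgrad f x' (xs - lam *: a).
Proof.
move=> [Hx' hmin] ax' a0.
pose g z := f z - dotv xs z.
have gmin : forall z, dotv a z <= beta -> g x' <= g z.
  move=> z /hmin; rewrite /bregman /g !dotvBr; lra.
have aa : 0 < dotv a a.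
  rewrite lt_neqAle dotvv_ge0 andbT eq_sym; apply/negP => /eqP /dotvv_eq0 /eqP.
  by rewrite (negbTE a0).
have seg : forall z1 z2, beta < dotv a z1 -> dotv a z2 < beta ->
    (g x' - g z1) / (dotv a z1 - beta) <= (g z2 - g x') / (beta - dotv a z2).
  move=> z1 z2 h1 h2; set d1 := dotv a z1 - beta; set d2 := beta - dotv a z2.
  have d1p : 0 < d1 by rewrite subr_gt0.
  have d2p : 0 < d2 by rewrite subr_gt0.
  apply: ratio_le => //.
  set th := d2 / (d1 + d2).
  have th0 : 0 <= th by apply: divr_ge0; lra.
  have th1 : th <= 1 by rewrite /th ler_pdivrMr; lra.
  set u := th *: z1 + (1 - th) *: z2.
  have au : dotv a u = beta.
    rewrite /u dotvDr !dotvZr /th; move: d1p d2p; rewrite /d1 /d2 => d1p d2p.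
    field; lra.
  have gu : g x' <= g u by apply: gmin; rewrite au.
  have cv := fconvex hf z1 z2 (ltac:(rewrite th0 th1 //) : 0 <= th <= 1).
  have gu2 : g u <= th * g z1 + (1 - th) * g z2.
    by move: cv; rewrite /g /u dotvDr !dotvZr -/u; lra.
  have e : th * g z1 + (1 - th) * g z2 = (d2 * g z1 + d1 * g z2) / (d1 + d2).
    by rewrite /th; field; lra.
  have dp : 0 < d1 + d2 by lra.
  have hh := le_trans gu gu2; rewrite e ler_pdivlMr // in hh; nra.
pose S := [set r | exists2 z, beta < dotv a z & r = (g x' - g z) / (dotv a z - beta)].
have hz2 : dotv a (x' - a) < beta by rewrite dotvBr ax'; lra.
have hz1 : beta < dotv a (x' + a) by rewrite dotvDr ax'; lra.
have Sub : forall r, S r -> r <= (g (x' - a) - g x') / (beta - dotv a (x' - a)).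
  by move=> r [z hz ->]; apply: seg.
exists (sup S) => z.
have goal : g x' + sup S * beta <= g z + sup S * dotv a z.
  have [h|h|h] := ltgtP (dotv a z) beta.
  - have : sup S <= (g z - g x') / (beta - dotv a z).
      apply: (sup_le_of (r0 := (g x' - g (x' + a)) / (dotv a (x' + a) - beta))).
        by exists (x' + a).
      by move=> r [z1 hz1' ->]; apply: seg.
    by rewrite ler_pdivlMr ?subr_gt0 //; nra.
  - have : (g x' - g z) / (dotv a z - beta) <= sup S.
      by apply: (sup_ge_of Sub); exists z.
    by rewrite ler_pdivrMr ?subr_gt0 //; nra.
  - by have := gmin z (ltac:(rewrite h //)); rewrite h; lra.
move: goal; rewrite /g !(dotvBl, dotvBr, dotvZl) ax'; lra.
Qed.

Lemma qstep_sg x xs a beta x' t : subgrad f x xs ->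
  is_bproj f xs x [set z | dotv a z <= beta] x' -> beta < dotv a x ->
  (forall s : R, fconj f (xs - t *: a) + t * beta <= fconj f (xs - s *: a) + s * beta) ->
  [/\ subgrad f x' (xs - t *: a), 0 <= t & dotv a x' = beta].
Proof.
move=> sg bp bx tmin.
have ax' := bproj_boundary sg bp bx.
have a0 : a != 0.
  apply/negP => /eqP a0; move: bx; case: bp => /= h _; move: h.
  by rewrite a0 !dotv0l; lra.
have [lam sgl] := kkt_half bp ax' a0.
have fc := fconj_sg halpha hf sgl.
have sgt : subgrad f x' (xs - t *: a).
  move=> z.
  have h1 := fconj_ge halpha hf (xs - t *: a) z sg.
  have h2 := tmin lam.
  move: h1 h2; rewrite fc !(dotvBl, dotvBr, dotvZl) ax'; lra.
split => //.
have h1 := sg x'; have h2 := sgt x.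
move: h1 h2; rewrite !(dotvBl, dotvBr, dotvZl) ax' => h1 h2.
have : 0 <= t * (dotv a x - beta) by lra.
by rewrite pmulr_lge0 // subr_gt0.
Qed.

End L3b.


Section L4.
Variable R : realType.
Variable n : nat.
Variable f : 'cV[R]_n -> R.
Hypothesis fcv : convex_fun f.
Implicit Types x y z xs ys u v d : 'cV[R]_n.

Lemma jensen_seq N (s : seq 'cV[R]_n) : size s = N.+1 ->
  f (N.+1%:R^-1 *: \sum_(v <- s) v) <= N.+1%:R^-1 * \sum_(v <- s) f v.
Proof.
elim: N s => [|N IH] [|v s] //=.
  case: s => // _; rewrite !big_cons !big_nil !addr0 invr1 scale1r mul1r //.
case=> hs; rewrite !big_cons.
have hM : (N.+2%:R : R) != 0 by rewrite pnatr_eq0.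
have hN : (N.+1%:R : R) != 0 by rewrite pnatr_eq0.
set M := (N.+2%:R : R) in hM *.
set K := (N.+1%:R : R) in hN *.
have eMK : M = K + 1 by rewrite /M /K -natr1.
have Kp : 0 < K by rewrite /K ltr0n.
set t := M^-1.
have t01 : 0 <= t <= 1.
  rewrite /t invr_ge0 eMK invf_le1; lra.
have e : t *: (v + \sum_(v <- s) v) = t *: v + (1 - t) *: (K^-1 *: \sum_(v <- s) v).
  apply/matrixP => i j; rewrite !mxE summxE ?mxE /t eMK.
  field; apply/andP; split => //; lra.
rewrite e; apply: le_trans (fcv _ _ t01) _.
have := IH s hs; rewrite -/K => h.
have et : 1 - t = K / M.
  rewrite /t eMK; field; rewrite gt_eqF //; have := ler0n R N; lra.
have Mp : 0 < M by rewrite eMK; lra.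
rewrite et mulrDr lerD2l.
apply: le_trans (_ : K / M * (K^-1 * \sum_(j <- s) f j) <= _).
  by rewrite ler_wpM2l // divr_ge0 // ltW.
by rewrite mulrAC mulVKf // mulrC.
Qed.

Lemma seg_ub u c s : 0 <= c -> `|s| <= c ->
  f (s *: u) <= `|f (c *: u)| + `|f ((- c) *: u)|.
Proof.
move=> c0 sc.
have [ec|cn0] := eqVneq c 0.
  move: sc; rewrite ec normr_le0 => /eqP ->; rewrite oppr0.
  have := ler_norm (f (0 *: u)); have := normr_ge0 (f (0 *: u)); lra.
have cp : 0 < c by rewrite lt_neqAle eq_sym cn0.
set th := (s + c) / (2 * c).
have th01 : 0 <= th <= 1.
  move: sc; rewrite ler_norml => /andP [h1 h2].
  rewrite /th divr_ge0 ?ler_pdivrMr ?mulr_gt0 //=; lra.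
have e : s *: u = th *: (c *: u) + (1 - th) *: ((- c) *: u).
  apply/matrixP => i j; rewrite !mxE /th; field; lra.
rewrite e; apply: le_trans (fcv _ _ th01) _.
have := ler_norm (f (c *: u)); have := ler_norm (f ((-c) *: u)).
have := normr_ge0 (f (c *: u)); have := normr_ge0 (f ((-c) *: u)).
case/andP: th01 => h1 h2; nra.
Qed.

Lemma cV_sum_delta (k : nat) (y : 'cV[R]_k) : y = \sum_(j < k) y j 0 *: delta_mx j 0.
Proof.
rewrite {1}(matrix_sum_delta y); apply: eq_bigr => j _; by rewrite big_ord1.
Qed.

End L4.

Section L4b.
Variable R : realType.

Lemma f_ub n (f : 'cV[R]_n -> R) : convex_fun f -> forall r : R,
  exists B, forall y, enorm y <= r -> f y <= B.
Proof.
case: n f => [|N] g gcv r.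
  exists (g 0) => y _; suff -> : y = 0 by [].
  by apply/matrixP => i; case: i.
pose e (j : 'I_N.+1) : 'cV[R]_N.+1 := delta_mx j 0.
pose c := N.+1%:R * `|r|.
exists (\sum_(j < N.+1) (`|g (c *: e j)| + `|g ((- c) *: e j)|)) => y hy.
pose s := [seq (N.+1%:R * y j 0) *: e j | j <- enum 'I_N.+1].
have hs : size s = N.+1 by rewrite size_map size_enum_ord.
have ey : y = N.+1%:R^-1 *: \sum_(v <- s) v.
  rewrite big_map big_enum /= scaler_sumr.
  rewrite {1}(cV_sum_delta y); apply: eq_bigr => j _.
  rewrite scalerA mulrA mulVf ?pnatr_eq0 // mul1r //.
rewrite ey; apply: le_trans (jensen_seq gcv hs) _.
rewrite big_map big_enum /=.
have Np : 0 < (N.+1%:R : R) by rewrite ltr0n.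
set B := \sum_(j < N.+1) (`|g (c *: e j)| + `|g ((- c) *: e j)|).
have tb : forall j, g ((N.+1%:R * y j 0) *: e j) <= B.
  move=> j; apply: le_trans (_ : `|g (c *: e j)| + `|g ((- c) *: e j)| <= B).
    apply: (@seg_ub _ _ _ gcv) => //.
      by rewrite /c mulr_ge0 ?normr_ge0.
    rewrite normrM ger0_norm ?ler0n // /c ler_pM2l //.
    apply: le_trans (coord_le y j) _; apply: le_trans hy _; exact: ler_norm.
  rewrite /B (bigD1 j) //= lerDl; apply: sumr_ge0 => k _; rewrite addr_ge0 //.
have : \sum_(j < N.+1) g ((N.+1%:R * y j 0) *: e j) <= \sum_(j < N.+1) B.
  by apply: ler_sum => j _; apply: tb.
rewrite sumr_const card_ord -(mulr_natl B) => h.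
apply: le_trans (_ : N.+1%:R^-1 * (N.+1%:R * B) <= _).
  by rewrite ler_pM2l ?invr_gt0 //; exact: h.
by rewrite mulrA mulVf ?pnatr_eq0 // mul1r.
Qed.

End L4b.


Section L5.
Variable R : realType.
Variable n : nat.
Variable f : 'cV[R]_n -> R.
Hypothesis fcv : convex_fun f.

Lemma f_lb x0 xs0 y : subgrad f x0 xs0 ->
  f x0 - enorm xs0 * (enorm y + enorm x0) <= f y.
Proof.
move=> sg; have h := sg y.
have h1 := dotv_absle xs0 (y - x0).
have h2 : enorm (y - x0) <= enorm y + enorm x0.
  by apply: le_trans (enormD _ _) _; rewrite enormN.
have h3 : enorm xs0 * enorm (y - x0) <= enorm xs0 * (enorm y + enorm x0).
  by rewrite ler_wpM2l ?enorm_ge0.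
move: h1; rewrite ler_norml => /andP [h4 _]; lra.
Qed.

Lemma sg_bound x xs r B : subgrad f x xs -> enorm x <= r ->
  (forall y, enorm y <= r + 1 -> f y <= B) -> enorm xs <= B - f x.
Proof.
move=> sg hx hB.
have fx : f x <= B by apply: hB; lra.
have [->|xs0] := eqVneq xs 0; first by rewrite enorm0; lra.
have np : 0 < enorm xs.
  rewrite lt_neqAle enorm_ge0 andbT eq_sym; apply/negP => /eqP /enorm_eq0 /eqP.
  by rewrite (negbTE xs0).
set u := (enorm xs)^-1 *: xs.
have nu : enorm u = 1 by rewrite /u enormZ ger0_norm ?invr_ge0 ?enorm_ge0 // mulVf // gt_eqF.
have hy : enorm (x + u) <= r + 1 by apply: le_trans (enormD _ _) _; rewrite nu; lra.
have := sg (x + u); rewrite addrAC subrr add0r /u dotvZr -enorm_sq.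
rewrite expr2 mulrA mulVf ?gt_eqF // mul1r.
have := hB _ hy; lra.
Qed.

Lemma lip_bound x d r r0 B : 0 < r0 -> enorm x <= r -> enorm d <= r0 ->
  (forall y, enorm y <= r + r0 -> f y <= B) ->
  f (x + d) - f x <= enorm d / r0 * (B - f x).
Proof.
move=> r0p hx hd hB.
have [d0|dn0] := eqVneq (enorm d) 0.
  by rewrite d0 !mul0r (enorm_eq0 d0) addr0 subrr.
have dp : 0 < enorm d by rewrite lt_neqAle eq_sym dn0 enorm_ge0.
set th := enorm d / r0.
have thp : 0 < th by rewrite divr_gt0.
have th1 : th <= 1 by rewrite ler_pdivrMr // mul1r.
set y := x + th^-1 *: d.
have hy : enorm y <= r + r0.
  have e1 : th^-1 * enorm d = r0 by rewrite /th invf_div mulfVK ?gt_eqF.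
  have e2 : `|th^-1| = th^-1 by rewrite ger0_norm // invr_ge0 ltW.
  apply: le_trans (enormD _ _) _; rewrite enormZ e2 e1; lra.
have e : x + d = th *: y + (1 - th) *: x.
  apply/matrixP => i j; rewrite !mxE; field; by rewrite gt_eqF.
have cv := fcv y x (ltac:(rewrite (ltW thp) th1 //) : 0 <= th <= 1).
rewrite e; have := hB _ hy; nra.
Qed.

End L5.

Section Tuples.
Variable R : realType.

Lemma sum_tuple_cons (T : finType) k (F : (k.+1).-tuple T -> R) :
  \sum_(u : (k.+1).-tuple T) F u = \sum_(x : T) \sum_(t : k.-tuple T) F [tuple of x :: t].
Proof.
rewrite pair_big /=.
rewrite (reindex (fun p : T * k.-tuple T => [tuple of p.1 :: p.2])) /=; first by [].
exists (fun u : (k.+1).-tuple T => (thead u, [tuple of behead u])).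
  by move=> [x t] _ /=; congr pair; try apply: val_inj.
by move=> u _; rewrite [RHS]tuple_eta.
Qed.

Lemma sum_tuple0 (T : finType) (F : 0.-tuple T -> R) : \sum_(t : 0.-tuple T) F t = F [tuple].
Proof. by rewrite (big_pred1 [tuple]) // => t; apply/esym/eqP; exact: tuple0. Qed.

Lemma sum_tuple_rcons (T : finType) k (F : (k.+1).-tuple T -> R) :
  \sum_(u : (k.+1).-tuple T) F u = \sum_(t : k.-tuple T) \sum_(x : T) F [tuple of rcons t x].
Proof.
elim: k F => [|k IH] F.
  rewrite sum_tuple_cons sum_tuple0; apply: eq_bigr => x _.
  by rewrite sum_tuple0; congr F; apply: val_inj.
rewrite sum_tuple_cons sum_tuple_cons; apply: eq_bigr => x _.
rewrite (IH (fun t => F [tuple of x :: t])); apply: eq_bigr => t _.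
by apply: eq_bigr => y _; congr F; apply: val_inj.
Qed.

Variable m : nat.
Variable p : 'I_m -> R.
Hypothesis hp : forall i, 0 < p i.
Hypothesis hp1 : \sum_i p i = 1.

Lemma wt_ge0 k (h : k.-tuple 'I_m) : 0 <= \prod_(j < k) p (tnth h j).
Proof. by apply: prodr_ge0 => j _; apply: ltW. Qed.

Lemma E_step k g : expect_hist p k.+1 g =
  expect_hist p k (fun h => \sum_i p i * g (rcons h i)).
Proof.
rewrite /expect_hist sum_tuple_rcons; apply: eq_bigr => t _.
rewrite big_distrr; apply: eq_bigr => x _ /=.
have -> : \prod_(j < k.+1) p (tnth [tuple of rcons t x] j) = \prod_(y <- rcons t x) p y.
  by rewrite (big_tuple _ _ [tuple of rcons t x]).
rewrite big_rcons /= -(big_tuple _ _ t (fun=> true) p); ring.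
Qed.

Lemma E_one k : expect_hist p k (fun=> 1) = 1.
Proof.
elim: k => [|k IH].
  by rewrite /expect_hist sum_tuple0 big_ord0 mulr1.
rewrite E_step; rewrite -[RHS]IH; congr expect_hist; apply: funext => h.
by under eq_bigr do rewrite mulr1.
Qed.

Lemma E_le k g1 g2 : (forall h, g1 h <= g2 h) -> expect_hist p k g1 <= expect_hist p k g2.
Proof.
move=> hg; apply: ler_sum => h _; apply: ler_wpM2l; [exact: wt_ge0 | exact: hg].
Qed.

Lemma E_lin k g1 g2 c : expect_hist p k (fun h => g1 h - c * g2 h) =
  expect_hist p k g1 - c * expect_hist p k g2.
Proof.
rewrite /expect_hist mulr_sumr -sumrB; apply: eq_bigr => h _; ring.
Qed.

Lemma E_scale k g c : expect_hist p k (fun h => c * g h) = c * expect_hist p k g.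
Proof. rewrite /expect_hist mulr_sumr; apply: eq_bigr => h _; ring. Qed.

Lemma E_ge0 k g : (forall h, 0 <= g h) -> 0 <= expect_hist p k g.
Proof.
move=> hg; apply: sumr_ge0 => h _; apply: mulr_ge0; [exact: wt_ge0 | exact: hg].
Qed.

Lemma E_expand k g c : expect_hist p k (fun h => (g h - c) ^+ 2) =
    expect_hist p k (fun h => g h ^+ 2) - 2 * c * expect_hist p k g + c ^+ 2 * expect_hist p k (fun=> 1).
Proof.
rewrite /expect_hist mulr_sumr mulr_sumr -sumrB -big_split /=.
apply: eq_bigr => h _; ring.
Qed.

Lemma E_sq k g : expect_hist p k g ^+ 2 <= expect_hist p k (fun h => g h ^+ 2).
Proof.
have h0 := E_ge0 k (fun h => sqr_ge0 (g h - expect_hist p k g)).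
move: h0; rewrite E_expand E_one; lra.
Qed.

End Tuples.


Section PInv.
Variable R : realType.
Lemma pinv_prop (k n : nat) (A : 'M[R]_(k, n)) (u : 'cV[R]_n) :
  A *m ((pinvmx A^T)^T *m (A *m u)) = A *m u.
Proof.
have hsub : ((A *m u)^T <= A^T)%MS by rewrite trmx_mul submxMl.
have := mulmxKpV hsub => /(congr1 trmx).
rewrite trmx_mul trmx_mul !trmxK => e.
exact: e.
Qed.
End PInv.

Section SeqRate.
Variable R : realType.
Lemma seq_rate (u : nat -> R) : (forall k, 0 <= u k) -> (forall k, u k.+1 <= u k - u k ^+ 2) ->
  forall k, u k.+1 * k.+1%:R <= 1.
Proof.
move=> u0 hu; elim => [|k IH].
  have := hu 0%N; have := u0 0%N; rewrite mulr1; nra.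
have ht : 1 <= (k.+1%:R : R) by rewrite ler1n.
have e : (k.+2%:R : R) = k.+1%:R + 1 by rewrite -natr1.
rewrite e.
have h1 := hu k.+1; have h2 := u0 k.+1; have h3 := u0 k.+2.
set t := (k.+1%:R : R) in IH ht h1 h2 h3 *.
set v := u k.+1 in IH h1 h2.
have v1 : v <= 1 by nra.
have h4 : 0 <= (1 - v * t) * (1 - v) by apply: mulr_ge0; lra.
have h5 : u k.+2 * (t + 1) <= (v - v ^+ 2) * (t + 1) by rewrite ler_wpM2r //; lra.
nra.
Qed.
End SeqRate.

Local Unset Implicit Arguments.
Section Main.
Variables (R : realType) (n m : nat) (f : 'cV[R]_n -> R) (alpha : R).
Hypothesis halpha : 0 < alpha.
Hypothesis hf : strongly_convex alpha f.
Variable C : 'I_m -> set 'cV[R]_n.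
Hypothesis hCne : exists x, forall i, C i x.
Variables (isQ : 'I_m -> bool) (mi : 'I_m -> nat).
Variables (A : forall i, 'M[R]_(mi i, n)) (Q : forall i, set 'cV[R]_(mi i)).
Hypothesis hQ : forall i, isQ i -> [/\ closed (Q i), cvx_set (Q i), Q i !=set0
                             & C i = [set x | Q i (A i *m x)]].
Hypothesis hreg : bdd_lin_regular C.
Hypothesis hregQ : forall i, isQ i ->
     bdd_lin_regular (fun b : bool => if b then Q i else mxrange (A i)).
Variables (X Xs : seq 'I_m -> 'cV[R]_n).
Hypothesis hX0 : subgrad f (X [::]) (Xs [::]).
Hypothesis hstep : forall h i, rbpsfp_step f isQ C A Q i (X h) (Xs h) (X (rcons h i)) (Xs (rcons h i)).
Variable p : 'I_m -> R.
Hypothesis hpos : forall i, 0 < p i.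
Hypothesis hp1 : \sum_i p i = 1.

Lemma step_cases h i :
  (~~ isQ i /\ is_bproj f (Xs h) (X h) (C i) (X (rcons h i)) /\
     admissible f (Xs h) (C i) (X (rcons h i)) (Xs (rcons h i))) \/
  (isQ i /\ exists2 p0, is_orth_proj (Q i) (A i *m X h) p0 &
     ((A i *m X h - p0 = 0 /\ X (rcons h i) = X h /\ Xs (rcons h i) = Xs h) \/
      (A i *m X h - p0 <> 0 /\
       is_bproj f (Xs h) (X h) [set z | dotv ((A i)^T *m (A i *m X h - p0)) z <=
          dotv ((A i)^T *m (A i *m X h - p0)) (X h) - enorm (A i *m X h - p0) ^+ 2] (X (rcons h i)) /\
       exists2 t : R, Xs (rcons h i) = Xs h - t *: ((A i)^T *m (A i *m X h - p0)) &
         forall s : R, fconj f (Xs h - t *: ((A i)^T *m (A i *m X h - p0))) +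
             t * (dotv ((A i)^T *m (A i *m X h - p0)) (X h) - enorm (A i *m X h - p0) ^+ 2) <=
           fconj f (Xs h - s *: ((A i)^T *m (A i *m X h - p0))) +
             s * (dotv ((A i)^T *m (A i *m X h - p0)) (X h) - enorm (A i *m X h - p0) ^+ 2)))).
Proof.
have := hstep h i; rewrite /rbpsfp_step.
case: (boolP (isQ i)) => hi /=.
  move=> [p0 hp0 [hw0 hwn]]; right; split => //; exists p0 => //.
  have [w0|wn0] := eqVneq (A i *m X h - p0) 0.
    by left; split => //; apply: hw0.
  have wn : A i *m X h - p0 <> 0 by apply/eqP.
  by right; split => //; exact: hwn wn.
by move=> [h1 h2]; left.
Qed.

Lemma halfspace_sub i x p0 z : isQ i -> is_orth_proj (Q i) (A i *m x) p0 -> C i z ->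
  dotv ((A i)^T *m (A i *m x - p0)) z <=
    dotv ((A i)^T *m (A i *m x - p0)) x - enorm (A i *m x - p0) ^+ 2.
Proof.
move=> hi hp Cz; have [_ cQ _ eC] := hQ i hi.
have Qz : Q i (A i *m z) by move: Cz; rewrite eC.
have := proj_ineq cQ hp Qz.
rewrite !dotv_mul trmxK enorm_sq (dotvC _ (A i *m z)) (dotvC _ (A i *m x)).
rewrite dotvBr dotvBl dotvBr dotvBl.
rewrite !(dotvBl, dotvBr) (dotvC (A i *m z) (A i *m x)) (dotvC (A i *m z) p0) (dotvC p0 (A i *m x)); lra.
Qed.

Lemma step_main h i : subgrad f (X h) (Xs h) ->
  subgrad f (X (rcons h i)) (Xs (rcons h i)) /\
  (forall z, C i z -> bregman f (Xs (rcons h i)) (X (rcons h i)) z <=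
     bregman f (Xs h) (X h) z - bregman f (Xs h) (X h) (X (rcons h i))).
Proof.
move=> sg.
case: (step_cases h i) => [[hi [bp [sg' adm]]] | [hi [p0 hp0 [[w0 [-> ->]] | [wn0 [bp [t et tmin]]]]]]].
- split => // z Cz; have := breg_ident f (Xs h) (X h) (Xs (rcons h i)) (X (rcons h i)) z.
  have := adm z Cz; lra.
- by split => // z Cz; rewrite breg_self subr0.
- set w := A i *m X h - p0 in wn0 bp et tmin.
  set a := (A i)^T *m w in bp et tmin.
  set beta := dotv a (X h) - enorm w ^+ 2 in bp tmin.
  have wp : 0 < enorm w ^+ 2.
    rewrite exprn_gt0 // lt_neqAle enorm_ge0 andbT eq_sym; apply/negP => /eqP /enorm_eq0.
    exact: wn0.
  have bx : beta < dotv a (X h) by rewrite /beta; lra.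
  have [sg' t0 ax'] := qstep_sg halpha hf sg bp bx tmin.
  rewrite et; split => // z Cz.
  have := breg_ident f (Xs h) (X h) (Xs h - t *: a) (X (rcons h i)) z.
  have hz := halfspace_sub i (X h) p0 z hi hp0 Cz; rewrite -/w -/a -/beta in hz.
  have e : Xs h - t *: a - Xs h = - (t *: a) by apply/matrixP => k l; rewrite !mxE; ring.
  rewrite e dotvNl dotvZl dotvBr ax'.
  have : 0 <= t * (beta - dotv a z) by rewrite mulr_ge0 // subr_ge0.
  lra.
Qed.

Lemma sg_all h : subgrad f (X h) (Xs h).
Proof.
elim/last_ind: h => [|h i IH]; first exact: hX0.
exact: (step_main h i IH).1.
Qed.

Lemma decr h i z : C i z -> bregman f (Xs (rcons h i)) (X (rcons h i)) z <=
     bregman f (Xs h) (X h) z - bregman f (Xs h) (X h) (X (rcons h i)).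
Proof. exact: (step_main h i (sg_all h)).2. Qed.

Definition Cap := [set x | forall i, C i x].

Lemma breg_mono h z : Cap z -> bregman f (Xs h) (X h) z <= bregman f (Xs [::]) (X [::]) z.
Proof.
move=> Cz; elim/last_ind: h => [|h i IH] //.
have := decr h i z (Cz i); have := breg_ge0 halpha hf (X (rcons h i)) (sg_all h); lra.
Qed.

Lemma X_bound : exists2 R1, 0 < R1 & forall h, enorm (X h) <= R1.
Proof.
case: hCne => z0 Cz0.
set B0 := bregman f (Xs [::]) (X [::]) z0.
exists (enorm z0 + Num.sqrt (2 * B0 / alpha) + 1).
  by have := enorm_ge0 z0; have := sqrtr_ge0 (2 * B0 / alpha); lra.
move=> h.
have h1 := breg_sc hf z0 (sg_all h).
have h2 := breg_mono h z0 Cz0.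
have h3 : enorm (z0 - X h) ^+ 2 <= 2 * B0 / alpha.
  rewrite ler_pdivlMr // mulrC; rewrite -/B0 in h2.
  move: h1; rewrite mulrC -mulrA => h1.
  have : alpha / 2 * enorm (z0 - X h) ^+ 2 <= B0 by lra.
  rewrite mulrC mulrA => h4.
  have e : enorm (z0 - X h) ^+ 2 * alpha / 2 * 2 = enorm (z0 - X h) ^+ 2 * alpha by field.
  lra.
have h4 : enorm (z0 - X h) <= Num.sqrt (2 * B0 / alpha).
  rewrite -[X in X <= _](ger0_norm (enorm_ge0 (z0 - X h))) -sqrtr_sqr.
  exact: ler_wsqrtr.
have h5 : enorm (X h) <= enorm z0 + enorm (z0 - X h).
  have e : X h = z0 + - (z0 - X h) by apply/matrixP => k l; rewrite !mxE; ring.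
  by rewrite {1}e; apply: le_trans (enormD _ _) _; rewrite enormN.
lra.
Qed.

Lemma Xs_bound : exists2 G, 0 <= G & forall h, enorm (Xs h) <= G.
Proof.
have [R1 R1p hR1] := X_bound.
have [B hB] := f_ub (proj1 hf) (R1 + 1).
set m0 := f (X [::]) - enorm (Xs [::]) * (R1 + enorm (X [::])).
exists `|B - m0|; first exact: normr_ge0.
move=> h; apply: le_trans (ler_norm _).
have h1 := sg_bound (sg_all h) (hR1 h) hB.
have h2 := f_lb (X h) hX0.
have h3 : enorm (Xs [::]) * (enorm (X h) + enorm (X [::])) <= enorm (Xs [::]) * (R1 + enorm (X [::])).
  by rewrite ler_wpM2l ?enorm_ge0 // lerD2r.
rewrite /m0; lra.
Qed.

Lemma distQ i rho : isQ i -> 0 < rho -> exists2 K0, 0 <= K0 & forall x p0, enorm x <= rho ->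
  is_orth_proj (Q i) (A i *m x) p0 -> euc_dist x (C i) <= K0 * enorm (A i *m x - p0).
Proof.
move=> hi rp.
have [_ cQ _ eC] := hQ i hi.
have [NA NA0 hNA] := mx_norm_bound (A i).
have [NP NP0 hNP] := mx_norm_bound (pinvmx (A i)^T)^T.
have [g gp hg] := hregQ i hi (NA * rho + 1) (ltac:(have := mulr_ge0 NA0 (ltW rp); lra)).
exists ((NP + 1) * Num.sqrt g); first by rewrite mulr_ge0 ?sqrtr_ge0 //; lra.
move=> x p0 hx hp.
set QR := [set y | forall j : bool, (if j then Q i else mxrange (A i)) y].
have d1 : euc_dist (A i *m x) QR ^+ 2 <= g * enorm (A i *m x - p0) ^+ 2.
  have hAx : enorm (A i *m x) <= NA * rho + 1.
    have := hNA x; have := ler_wpM2l NA0 hx; lra.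
  have := hg _ hAx; rewrite big_bool /= (dist_of_proj hp).
  rewrite (@euc_dist_in _ _ (mxrange (A i)) (A i *m x)); last by exists x.
  by rewrite expr0n /= addr0.
have d2 : euc_dist (A i *m x) QR <= Num.sqrt g * enorm (A i *m x - p0).
  have e1 : euc_dist (A i *m x) QR = Num.sqrt (euc_dist (A i *m x) QR ^+ 2).
    by rewrite sqrtr_sqr ger0_norm // euc_dist_ge0.
  have e2 : Num.sqrt (g * enorm (A i *m x - p0) ^+ 2) = Num.sqrt g * enorm (A i *m x - p0).
    by rewrite sqrtrM ?ltW // sqrtr_sqr ger0_norm // enorm_ge0.
  rewrite e1 -e2; exact: ler_wsqrtr.
have d3 : euc_dist x (C i) / (NP + 1) <= euc_dist (A i *m x) QR.
  case: hCne => z0 Cz0.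
  have QRz : QR (A i *m z0).
    by case; [move: (Cz0 i); rewrite eC | exists z0].
  apply: (le_inf_of (r0 := enorm (A i *m x - A i *m z0))); first by exists (A i *m z0).
  move=> r [y QRy ->].
  have [u0 yu] : mxrange (A i) y by exact: (QRy false).
  have Qy : Q i y by exact: (QRy true).
  set d := (pinvmx (A i)^T)^T *m (A i *m (u0 - x)).
  have Cxd : C i (x + d).
    rewrite eC /= mulmxDr /d pinv_prop mulmxBr -yu addrC subrK //.
  have := euc_dist_le x Cxd.
  have -> : x - (x + d) = - d by rewrite opprD addrA subrr add0r.
  rewrite enormN => h1.
  have h2 : enorm d <= NP * enorm (A i *m x - y).
    have e : A i *m (u0 - x) = y - A i *m x by rewrite mulmxBr -yu.
    by rewrite /d e enormB; exact: hNP.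
  rewrite ler_pdivrMr; last by lra.
  have := enorm_ge0 (A i *m x - y); have := enorm_ge0 d; nra.
rewrite ler_pdivrMr in d3; last by lra.
have := euc_dist_ge0 (C i) x.
have : 0 <= NP + 1 by lra.
nra.
Qed.

Lemma dist_i i rho : 0 < rho -> exists2 K, 0 < K & forall h, enorm (X h) <= rho ->
  euc_dist (X h) (C i) <= K * enorm (X h - X (rcons h i)).
Proof.
move=> rp.
case: (boolP (isQ i)) => hi; last first.
  exists 1 => // h _; rewrite mul1r.
  case: (step_cases h i) => [[_ [[Cx _] _]] | [hi' _]]; last by rewrite hi' in hi.
  exact: euc_dist_le.
have [K0 K00 hK0] := distQ i rho hi rp.
have [NAt NAt0 hNAt] := mx_norm_bound (A i)^T.
exists (K0 * NAt + 1); first by have := mulr_ge0 K00 NAt0; lra.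
move=> h hx.
case: (step_cases h i) => [[hi' _] | [_ [p0 hp0 [[w0 [-> _]] | [wn0 [[Hx' _] _]]]]]].
- by rewrite hi in hi'.
- have [_ _ _ eC] := hQ i hi.
  have Cx : C i (X h).
    rewrite eC /=; have -> : A i *m X h = p0 by apply/eqP; rewrite -subr_eq0 w0.
    by case: hp0.
  rewrite euc_dist_in // subrr enorm0 mulr0 //.
- set w := A i *m X h - p0 in wn0 Hx'.
  have hd := hK0 _ _ hx hp0; rewrite -/w in hd.
  have wp : 0 < enorm w.
    rewrite lt_neqAle enorm_ge0 andbT eq_sym; apply/negP => /eqP /enorm_eq0; exact: wn0.
  have h1 : enorm w ^+ 2 <= dotv ((A i)^T *m w) (X h - X (rcons h i)).
    by rewrite dotvBr; move: Hx' => /=; lra.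
  have h2 := dotv_le ((A i)^T *m w) (X h - X (rcons h i)).
  have h3 : enorm ((A i)^T *m w) * enorm (X h - X (rcons h i)) <=
            NAt * enorm w * enorm (X h - X (rcons h i)).
    by rewrite ler_wpM2r ?enorm_ge0 // hNAt.
  have h4 : enorm w <= NAt * enorm (X h - X (rcons h i)).
    have : enorm w * enorm w <= enorm w * (NAt * enorm (X h - X (rcons h i))).
      by rewrite -expr2 mulrCA mulrA; lra.
    by rewrite ler_pM2l.
  have h5 := enorm_ge0 (X h - X (rcons h i)).
  have h6 : K0 * enorm w <= K0 * (NAt * enorm (X h - X (rcons h i))) by rewrite ler_wpM2l.
  nra.
Qed.

Lemma dist_all rho : 0 < rho -> exists2 K, 0 < K & forall h i, enorm (X h) <= rho ->
  euc_dist (X h) (C i) <= K * enorm (X h - X (rcons h i)).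
Proof.
move=> rp.
have := fun i => dist_i i rho rp.
move=> hi.
have hi' : forall i, exists K, 0 < K /\ forall h, enorm (X h) <= rho ->
    euc_dist (X h) (C i) <= K * enorm (X h - X (rcons h i)).
  by move=> i; have [K K0 hK] := hi i; exists K.
have [Kf hKf] := choice hi'.
exists (1 + \sum_i Kf i).
  have : 0 <= \sum_i Kf i by apply: sumr_ge0 => i _; exact: ltW (hKf i).1.
  lra.
move=> h i hx.
have [K0 hK] := hKf i.
apply: le_trans (hK h hx) _.
rewrite ler_wpM2r ?enorm_ge0 //.
rewrite (bigD1 i) //=.
have : 0 <= \sum_(j | j != i) Kf j by apply: sumr_ge0 => j _; exact: ltW (hKf j).1.
lra.
Qed.

Definition bd2 h := inf (bset f (Xs h) (X h) Cap).

Lemma Cap_ne : exists z, Cap z.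
Proof. by case: hCne => z hz; exists z. Qed.

Lemma bd2_step h i : bd2 (rcons h i) + alpha / 2 * enorm (X h - X (rcons h i)) ^+ 2 <= bd2 h.
Proof.
have [z0 Cz0] := Cap_ne.
rewrite {2}/bd2; apply: (bd2_ge Cz0) => z Cz.
have h1 := bd2_le halpha hf (sg_all (rcons h i)) Cz.
have h2 := decr h i z (Cz i).
have h3 := breg_sc hf (X (rcons h i)) (sg_all h).
rewrite enormB in h3.
rewrite /bd2; lra.
Qed.

Lemma bd2_lb h : alpha / 2 * euc_dist (X h) Cap ^+ 2 <= bd2 h.
Proof.
have [z0 Cz0] := Cap_ne.
rewrite /bd2; apply: (bd2_ge Cz0) => z Cz.
apply: le_trans (breg_sc hf z (sg_all h)).
apply: ler_wpM2l; first by rewrite divr_ge0 // ltW.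
rewrite ler_pXn2r ?nnegrE ?euc_dist_ge0 ?enorm_ge0 //.
by rewrite enormB; apply: euc_dist_le.
Qed.

Lemma bd2_ge0' h : 0 <= bd2 h.
Proof. exact: (bd2_ge0 halpha hf _ (sg_all h)). Qed.

Lemma pmin : exists2 pm, 0 < pm & forall i, pm <= p i.
Proof.
have [i0 _] : exists i0 : 'I_m, true.
  case: m p hp1 => [|m'] q hq; last by exists ord0.
  by move: hq; rewrite big_ord0 => /eqP; rewrite eq_sym oner_eq0.
set S := \sum_i (p i)^-1.
have hS : forall i, (p i)^-1 <= S.
  move=> i; rewrite /S (bigD1 i) //= lerDl; apply: sumr_ge0 => j _.
  by rewrite invr_ge0 ltW ?hpos.
have Sp : 0 < S by apply: lt_le_trans (hS i0); rewrite invr_gt0 hpos.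
exists S^-1; first by rewrite invr_gt0.
move=> i; rewrite -[S^-1]mul1r ler_pdivrMr //.
have := ler_wpM2l (ltW (hpos i)) (hS i).
by rewrite mulfV ?gt_eqF.
Qed.

Lemma key : exists2 c1, 0 < c1 & forall h,
  \sum_i p i * bd2 (rcons h i) <= bd2 h - c1 * euc_dist (X h) Cap ^+ 2.
Proof.
have [R1 R1p hR1] := X_bound.
have [K Kp hK] := dist_all R1 R1p.
have [g gp hg] := hreg R1 R1p.
have [pm pmp hpm] := pmin.
set c2 := alpha / (2 * K ^+ 2).
have c2p : 0 < c2 by rewrite divr_gt0 // mulr_gt0 // exprn_gt0.
exists (c2 * pm / g); first by rewrite !divr_gt0 // mulr_gt0.
move=> h.
have per : forall i, p i * bd2 (rcons h i) <=
    p i * bd2 h - c2 * (p i * euc_dist (X h) (C i) ^+ 2).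
  move=> i.
  have h1 := bd2_step h i.
  have h2 := hK h i (hR1 h).
  have h3 : euc_dist (X h) (C i) ^+ 2 <= K ^+ 2 * enorm (X h - X (rcons h i)) ^+ 2.
    rewrite -exprMn ler_pXn2r ?nnegrE ?euc_dist_ge0 // mulr_ge0 ?enorm_ge0 // ltW //.
  have h4 : c2 * euc_dist (X h) (C i) ^+ 2 <= alpha / 2 * enorm (X h - X (rcons h i)) ^+ 2.
    have e : alpha / 2 = c2 * K ^+ 2 by rewrite /c2; field; rewrite gt_eqF.
    by rewrite e -mulrA ler_wpM2l // ltW.
  have h5 : c2 * euc_dist (X h) (C i) ^+ 2 <= bd2 h - bd2 (rcons h i) by lra.
  have := ler_wpM2l (ltW (hpos i)) h5.
  rewrite mulrBr mulrCA; lra.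
apply: le_trans (ler_sum _ (fun i _ => per i)) _.
rewrite sumrB -mulr_suml hp1 mul1r -mulr_sumr lerD2l lerN2.
have hs : pm * \sum_i euc_dist (X h) (C i) ^+ 2 <= \sum_i p i * euc_dist (X h) (C i) ^+ 2.
  rewrite mulr_sumr; apply: ler_sum => i _; apply: ler_wpM2r; [exact: sqr_ge0 | exact: hpm].
have hd := hg (X h) (hR1 h).
rewrite -/Cap in hd.
have : euc_dist (X h) Cap ^+ 2 / g <= \sum_i euc_dist (X h) (C i) ^+ 2.
  by rewrite ler_pdivrMr // mulrC.
move=> hd2.
have e : c2 * pm / g * euc_dist (X h) Cap ^+ 2 = c2 * (pm * (euc_dist (X h) Cap ^+ 2 / g)).
  by rewrite /=; ring.
rewrite e; apply: ler_wpM2l; first exact: ltW.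
apply: le_trans hs; apply: ler_wpM2l; [exact: ltW | exact: hd2].
Qed.


Lemma bd2_ub : exists2 L, 0 < L & forall h, bd2 h <= L * euc_dist (X h) Cap.
Proof.
have [R1 R1p hR1] := X_bound.
have [G G0 hG] := Xs_bound.
have [z0 Cz0] := Cap_ne.
set r0 := R1 + enorm z0 + 1.
have r0p : 0 < r0 by have := enorm_ge0 z0; rewrite /r0; lra.
have [B hB] := f_ub (proj1 hf) (R1 + r0).
set m0 := f (X [::]) - enorm (Xs [::]) * (R1 + enorm (X [::])).
have hm : forall h, m0 <= f (X h).
  move=> h; have h2 := f_lb (X h) hX0.
  have h3 : enorm (Xs [::]) * (enorm (X h) + enorm (X [::])) <= enorm (Xs [::]) * (R1 + enorm (X [::])).
    by rewrite ler_wpM2l ?enorm_ge0 // lerD2r.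
  rewrite /m0; lra.
set Dl := `|B - m0|.
have Dl0 : 0 <= Dl by exact: normr_ge0.
set L := Dl / r0 + G + 1.
have Lp : 0 < L by rewrite /L; have := divr_ge0 Dl0 (ltW r0p); lra.
exists L => // h.
set x := X h; set D := euc_dist x Cap.
have D0 : 0 <= D by exact: euc_dist_ge0.
have Dle : D <= r0 - 1.
  apply: le_trans (euc_dist_le x Cz0) _.
  apply: le_trans (enormD _ _) _; rewrite enormN /r0; have := hR1 h; rewrite -/x; lra.
have main : forall e, 0 < e -> e <= 1 -> bd2 h <= L * (D + e).
  move=> e e0 e1.
  have [z Cz hz] := euc_dist_approx x Cap_ne e0.
  set d := z - x.
  have hd : enorm d <= r0 by rewrite /d enormB; lra.
  have hl := lip_bound (proj1 hf) r0p (hR1 h) hd hB.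
  have e2 : x + d = z by rewrite /d addrC subrK.
  rewrite -/x e2 in hl.
  have t1 : f z - f x <= enorm d / r0 * Dl.
    apply: le_trans hl _; apply: ler_wpM2l; first by rewrite divr_ge0 ?enorm_ge0 // ltW.
    apply: le_trans (ler_norm _); have := hm h; rewrite -/x; lra.
  have t2 : - dotv (Xs h) d <= G * enorm d.
    have := dotv_absle (Xs h) d; rewrite ler_norml => /andP [t _].
    have := ler_wpM2r (enorm_ge0 d) (hG h); lra.
  have t3 : enorm d / r0 * Dl = Dl / r0 * enorm d by ring.
  have t4 : (Dl / r0 + G) * enorm d <= L * (D + e).
    apply: ler_pM; rewrite ?enorm_ge0 //; first by have := divr_ge0 Dl0 (ltW r0p); lra.
      by rewrite /L; lra.
    by rewrite enormB -/d in hz; lra.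
  have t5 := bd2_le halpha hf (sg_all h) Cz.
  rewrite /bd2; move: t5; rewrite /bregman -/x -/d; rewrite mulrDl in t4; lra.
apply: le_of_forall_eps => e e0.
have [eL|Le] := leP e L.
  have := main (e / L) (divr_gt0 e0 Lp) (ltac:(rewrite ler_pdivrMr // mul1r)).
  have ee : L * (D + e / L) = L * D + e by rewrite mulrDr mulrCA mulfV ?gt_eqF // mulr1.
  lra.
have := main 1 ltr01 (lexx _); rewrite mulrDr mulr1; lra.
Qed.

Lemma E_ext k g1 g2 : (forall h, g1 h = g2 h) -> expect_hist p k g1 = expect_hist p k g2.
Proof. by move=> e; congr expect_hist; apply: funext. Qed.

Lemma main_result :
  [/\ (forall omega : nat -> 'I_m, exists M : R, forall k,
         enorm (X (mkseq omega k)) <= M /\ enorm (Xs (mkseq omega k)) <= M),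
      (forall h i, bdist f (Xs (rcons h i)) (X (rcons h i)) Cap <= bdist f (Xs h) (X h) Cap),
      (fun k => expect_hist p k (fun h => bdist f (Xs h) (X h) Cap ^+ 2)) @ \oo --> (0 : R)
    & exists2 c : R, 0 < c & forall k : nat, (1 <= k)%N ->
        expect_hist p k (fun h => euc_dist (X h) Cap) <= c / Num.sqrt (k%:R)].
Proof.
have [z0 Cz0] := Cap_ne.
have [c1 c1p hc1] := key.
have [L Lp hL] := bd2_ub.
set a := fun k => expect_hist p k bd2.
have ea : forall k, expect_hist p k (fun h => bdist f (Xs h) (X h) Cap ^+ 2) = a k.
  by move=> k; apply: E_ext => h; rewrite (bdist_sq halpha hf _ (sg_all h)).
have a0 : forall k, 0 <= a k by move=> k; apply: E_ge0 => // h; exact: bd2_ge0'.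
set c := c1 / L ^+ 2.
have cp : 0 < c by rewrite divr_gt0 // exprn_gt0.
have rec : forall k, a k.+1 <= a k - c * a k ^+ 2.
  move=> k; rewrite /a E_step.
  apply: le_trans (E_le hpos k hc1) _.
  rewrite (E_lin p k bd2 (fun h => euc_dist (X h) Cap ^+ 2)).
  have h1 : forall h, (L^-1 * bd2 h) ^+ 2 <= euc_dist (X h) Cap ^+ 2.
    move=> h; have hb := bd2_ge0' h.
    have hx : 0 <= L^-1 * bd2 h by rewrite mulr_ge0 // invr_ge0 ltW.
    rewrite ler_pXn2r ?nnegrE ?euc_dist_ge0 //.
    by rewrite ler_pdivrMl //; exact: hL.
  have h2 := E_le hpos k h1.
  have h3 := E_sq hpos hp1 k (fun h => L^-1 * bd2 h).
  rewrite (E_scale p) in h3.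
  have e : c * a k ^+ 2 = c1 * (L^-1 * a k) ^+ 2.
    by rewrite /c; field; rewrite gt_eqF.
  rewrite e lerD2l lerN2; apply: ler_wpM2l; first exact: ltW.
  exact: le_trans h3 h2.
set u := fun k => c * a k.
have u0 : forall k, 0 <= u k by move=> k; rewrite mulr_ge0 // ltW.
have urec : forall k, u k.+1 <= u k - u k ^+ 2.
  move=> k; rewrite /u; have := ler_wpM2l (ltW cp) (rec k).
  have e : c * (a k - c * a k ^+ 2) = c * a k - (c * a k) ^+ 2 by ring.
  by rewrite e.
have ub : forall k, a k.+1 <= (c * k.+1%:R)^-1.
  move=> k; have := seq_rate u0 urec k; rewrite /u => h.
  have cK : 0 < c * k.+1%:R by rewrite mulr_gt0 // ltr0n.
  by rewrite -(ler_pM2l cK) mulfV ?gt_eqF // mulrAC.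
split.
- move=> omega; have [R1 _ hR1] := X_bound; have [G G0 hG] := Xs_bound.
  exists (R1 + G) => k; split.
    by apply: le_trans (hR1 _) _; rewrite lerDl.
  by apply: le_trans (hG _) _; rewrite lerDr; have := hR1 [::]; have := enorm_ge0 (X [::]); lra.
- move=> h i; rewrite /bdist; apply: ler_wsqrtr.
  apply: (bd2_ge Cz0) => z Cz.
  apply: le_trans (bd2_le halpha hf (sg_all (rcons h i)) Cz) _.
  have := decr h i z (Cz i); have := breg_ge0 halpha hf (X (rcons h i)) (sg_all h); lra.
- have -> : (fun k => expect_hist p k (fun h => bdist f (Xs h) (X h) Cap ^+ 2)) = a.
    by apply: funext => k; exact: ea.
  rewrite -cvg_shiftS.
  apply: (@squeeze_cvgr _ _ _ _ (fun=> 0) (fun k => c^-1 * harmonic k)).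
  + apply: nearW => k /=; rewrite a0 /=.
    by rewrite -invfM; exact: ub k.
  + exact: cvg_cst.
  + have := cvgMl_tmp (a := c^-1) (@cvg_harmonic R); rewrite mulr0; exact.
- exists (Num.sqrt (2 / (alpha * c))); first by rewrite sqrtr_gt0 divr_gt0 // mulr_gt0.
  move=> [|k] hk; first by rewrite ltnn in hk.
  have E0 : 0 <= expect_hist p k.+1 (fun h => euc_dist (X h) Cap).
    by apply: (E_ge0 hpos) => h; exact: euc_dist_ge0.
  have h1 := E_sq hpos hp1 k.+1 (fun h => euc_dist (X h) Cap).
  have h2 : expect_hist p k.+1 (fun h => euc_dist (X h) Cap ^+ 2) <= 2 / alpha * a k.+1.
    rewrite /a -(E_scale p); apply: (E_le hpos k.+1) => h.
    have hl := bd2_lb h.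
    have e : euc_dist (X h) Cap ^+ 2 = 2 / alpha * (alpha / 2 * euc_dist (X h) Cap ^+ 2).
      by field; rewrite gt_eqF.
    rewrite {1}e; apply: ler_wpM2l => //; apply: divr_ge0 => //; exact: ltW.
  have h3 : 2 / alpha * a k.+1 <= 2 / alpha * (c * k.+1%:R)^-1.
    by apply: ler_wpM2l; [rewrite divr_ge0 // ltW | exact: ub].
  have gen : forall K : R, 0 < K ->
      (Num.sqrt (2 / (alpha * c)) / Num.sqrt K) ^+ 2 = 2 / alpha * (c * K)^-1.
    move=> K Kp'.
    have q0 : 0 <= 2 / (alpha * c) by rewrite divr_ge0 // mulr_ge0 // ltW.
    rewrite expr_div_n !sqr_sqrtr ?(ltW Kp') //.
    by rewrite !invfM; ring.
  have Kp : 0 < (k.+1%:R : R) by rewrite ltr0n.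
  set T := Num.sqrt (2 / (alpha * c)) / Num.sqrt k.+1%:R.
  have T0 : 0 <= T by rewrite /T divr_ge0 ?sqrtr_ge0.
  have e1 : expect_hist p k.+1 (fun h => euc_dist (X h) Cap) =
      Num.sqrt (expect_hist p k.+1 (fun h => euc_dist (X h) Cap) ^+ 2).
    by rewrite sqrtr_sqr ger0_norm.
  have e2 : T = Num.sqrt (T ^+ 2) by rewrite sqrtr_sqr ger0_norm.
  rewrite e1 e2 /T gen //; apply: ler_wsqrtr.
  by apply: le_trans h1 _; apply: le_trans h2 h3.
Qed.


End Main.



Unset Implicit Arguments.
Set Strict Implicit.

Theorem theorem4p2 (R : realType) (n m : nat) (f : 'cV[R]_n -> R) (alpha : R)
  (halpha : 0 < alpha) (hf : strongly_convex alpha f)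
  (C : 'I_m -> set 'cV[R]_n)
  (hCcl : forall i, closed (C i)) (hCcv : forall i, cvx_set (C i))
  (hCne : exists x, forall i, C i x)
  (isQ : 'I_m -> bool) (mi : 'I_m -> nat)
  (A : forall i, 'M[R]_(mi i, n)) (Q : forall i, set 'cV[R]_(mi i))
  (hQ : forall i, isQ i -> [/\ closed (Q i), cvx_set (Q i), Q i !=set0
                             & C i = [set x | Q i (A i *m x)]])
  (hreg : bdd_lin_regular C)
  (hregQ : forall i, isQ i ->
     bdd_lin_regular (fun b : bool => if b then Q i else mxrange (A i)))
  (p : 'I_m -> R) (hp : forall i, 0 < p i) (hp1 : \sum_i p i = 1)
  (X Xs : seq 'I_m -> 'cV[R]_n)
  (hX0 : subgrad f (X [::]) (Xs [::]))
  (hstep : forall h i, rbpsfp_step f isQ C A Q i (X h) (Xs h) (X (rcons h i)) (Xs (rcons h i))) :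
  let Cap := [set x | forall i, C i x] in
  [/\ (forall omega : nat -> 'I_m, exists M : R, forall k,
         enorm (X (mkseq omega k)) <= M /\ enorm (Xs (mkseq omega k)) <= M),
      (forall h i, bdist f (Xs (rcons h i)) (X (rcons h i)) Cap <= bdist f (Xs h) (X h) Cap),
      (fun k => expect_hist p k (fun h => bdist f (Xs h) (X h) Cap ^+ 2)) @ \oo --> (0 : R)
    & exists2 c : R, 0 < c & forall k : nat, (1 <= k)%N ->
        expect_hist p k (fun h => euc_dist (X h) Cap) <= c / Num.sqrt (k%:R)].
Proof.
move=> Cap.
exact: (@main_result R n m f alpha halpha hf C hCne isQ mi A Q hQ hreg hregQ X Xs hX0 hstep p hp hp1).
Qed.
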